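(* Let $G=(L\cup R,E)$ be a Tanner graph with girth $g>4$, and let $\mathcal{S}\subset L$ be an $(a,b)$ trapping set. If $\mathcal{S}$ contains a variable node $v$ with $d(v)>b$, then $a\ge d(v)+1-b$.
   Context: A Tanner graph is a bipartite graph $G=(L\cup R,E)$ with variable nodes $L$ and check nodes $R$, without parallel edges; $d(v)$ is the degree of $v$ in $G$, and the girth is the length of a shortest cycle. For $\mathcal{S}\subset L$, $\Gamma(\mathcal{S})$ is the set of neighbors of $\mathcal{S}$ in $R$; the induced subgraph $G(\mathcal{S})$ has node set $\mathcal{S}\cup\Gamma(\mathcal{S})$ and the edges of $G$ between them; $\Gamma_{\mathrm{o}}(\mathcal{S})$ is the set of check nodes in $\Gamma(\mathcal{S})$ of odd degree in $G(\mathcal{S})$. $\mathcal{S}$ is an $(a,b)$ trapping set if $|\mathcal{S}|=a$ and $|\Gamma_{\mathrm{o}}(\mathcal{S})|=b$. *)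

(* Defs.v *)
From mathcomp Require Import all_boot.
Set Implicit Arguments. Unset Strict Implicit. Unset Printing Implicit Defensive.

(* A Tanner graph: variable nodes L, check nodes R (finite types), edges given
   by a boolean relation adj : L -> R -> bool (so no parallel edges). *)

Definition tanner_adj (L R : finType) (adj : L -> R -> bool) : rel (L + R)%type :=
  fun x y => match x, y with
             | inl v, inr c => adj v c
             | inr c, inl v => adj v c
             | _, _ => false
             end.

Definition is_graph_cycle (L R : finType) (adj : L -> R -> bool) (s : seq (L + R)%type) : Prop :=
  [/\ 3 <= size s, uniq s & cycle (tanner_adj adj) s].

(* girth > k : every cycle has length > k (vacuous for acyclic graphs, girth = oo) *)
Definition girth_gt (L R : finType) (adj : L -> R -> bool) (k : nat) : Prop :=
  forall s, is_graph_cycle adj s -> k < size s.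

Definition vdeg (L R : finType) (adj : L -> R -> bool) (v : L) : nat :=
  #|[set c | adj v c]|.

Definition nbhd (L R : finType) (adj : L -> R -> bool) (S : {set L}) : {set R} :=
  [set c | [exists v in S, adj v c]].

Definition deg_in (L R : finType) (adj : L -> R -> bool) (S : {set L}) (c : R) : nat :=
  #|[set v in S | adj v c]|.

Definition odd_nbhd (L R : finType) (adj : L -> R -> bool) (S : {set L}) : {set R} :=
  [set c in nbhd adj S | odd (deg_in adj S c)].

Definition trapping_set (L R : finType) (adj : L -> R -> bool) (S : {set L}) (a b : nat) : Prop :=
  #|S| = a /\ #|odd_nbhd adj S| = b.

(* Main.v *)
Require Import Defs.
From mathcomp Require Import all_boot.
From mathcomp Require Import zify.

Theorem lemma5 (L R : finType) (adj : L -> R -> bool) (S : {set L}) (a b : nat) (v : L) :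
  girth_gt adj 4 ->
  trapping_set adj S a b ->
  v \in S ->
  b < vdeg adj v ->
  vdeg adj v + 1 - b <= a.
Proof.
move=> hg [hSa hSb] vS hb.
set E := [set c | adj v c && ~~ odd (deg_in adj S c)].
have hE : vdeg adj v <= #|E| + b.
  rewrite -hSb /vdeg; apply: leq_trans (leq_card_setU E (odd_nbhd adj S)).
  apply: subset_leq_card.
  apply/subsetP=> c; rewrite /odd_nbhd /nbhd !inE => hc.
  rewrite hc /=; case: (odd _); rewrite ?orbT ?orbF //=.
  by rewrite andbT; apply/existsP; exists v; rewrite vS.
have ex2 : forall c, c \in E -> exists u, [&& u \in S, adj u c & u != v].
  move=> c; rewrite inE => /andP [hvc hev].
  have h1 : v \in [set u in S | adj u c] by rewrite inE vS.
  have h2 : 1 < deg_in adj S c.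
    move: hev; rewrite /deg_in (cardD1 v) h1 /=.
    by case: #|_| => [|n].
  move: h2; rewrite /deg_in (cardD1 v) h1 /= ltnS => /card_gt0P [u].
  rewrite !inE => /andP [hu /andP [h3 h4]]; exists u.
  by rewrite hu h3 h4.
pose f c := if [pick u | [&& u \in S, adj u c & u != v]] is Some u then u else v.
have fP : forall c, c \in E -> [&& f c \in S, adj (f c) c & f c != v].
  move=> c /ex2 [u hu]; rewrite /f; case: pickP => [x -> //|h].
  by rewrite h in hu.
have finj : {in E &, injective f}.
  move=> c1 c2 h1 h2 heq; apply/eqP; apply/negPn/negP => hne.
  have := fP _ h1; have := fP _ h2; rewrite -heq.
  move=> /and3P [_ a2 _] /and3P [_ a1 nv].
  have va1 : adj v c1 by move: h1; rewrite inE => /andP [].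
  have va2 : adj v c2 by move: h2; rewrite inE => /andP [].
  suff : 4 < 4 by [].
  apply: (hg [:: inl v; inr c1; inl (f c1); inr c2]); split => //.
    have e1 : (inl v == inl (f c1) :> (L+R)%type) = false.
      by apply/eqP => -[] e; move: nv; rewrite e eqxx.
    have e2 : (inr c1 == inr c2 :> (L+R)%type) = false.
      by apply/eqP => -[] e; move: hne; rewrite e eqxx.
    by rewrite /= !inE /= !andbT e1 e2.
  by rewrite /= va1 a1 a2 va2.
have hsub : f @: E \subset S :\ v.
  apply/subsetP=> x /imsetP [c hc ->]; rewrite !inE.
  by case/and3P: (fP _ hc) => -> _ ->.
have := subset_leq_card hsub; rewrite card_in_imset // => hc.
have := cardsD1 v S; rewrite vS hSa => hd.
lia.
Qed.
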